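(* Let $v\ge 2$, $n\ge 1$ and $\epsilon>0$, and let $(\mathcal{X},\mathcal{Y},\mathcal{I})$ be a $(v,b,r,k,\lambda)$-block design with $\mathcal{X}=\{1,\dots,v\}$. Let $Q$ be the associated block design mechanism, $Q(y|x)=\alpha e^\epsilon$ if $(x,y)\in\mathcal{I}$ and $Q(y|x)=\alpha$ otherwise, where $\alpha=\frac{1}{re^\epsilon+b-r}$. Let $X_1,\dots,X_n$ be i.i.d. with distribution $P\in\Delta_v$ and, independently for each $i$, $Y_i\sim Q(\cdot|X_i)$. Define, for $x\in\mathcal{X}$, $$\hat{P}_{n,x}(Y_1,\dots,Y_n)=\frac{1}{(r-\lambda)(e^\epsilon-1)}\left(\frac{N_x(Y_1,\dots,Y_n)}{n\alpha}-(\lambda e^\epsilon+(r-\lambda))\right),\qquad N_x(Y_1,\dots,Y_n)=\sum_{i=1}^n \mathbb{1}(Y_i\in\mathcal{I}_x).$$ Then $\hat{P}_n=(\hat P_{n,1},\dots,\hat P_{n,v})$ is unbiased, i.e. $\mathbb{E}_{P,Q}[\hat P_n]=P$ for all $P\in\Delta_v$; its risk under the squared loss $\ell_2^2(p,\hat p)=\sum_{x=1}^v (p_x-\hat p_x)^2$ is $$R_{v,n}(\ell_2^2,P,Q,\hat P_n)=\frac{1}{n}\left(\frac{(v-1)^2(ke^\epsilon+v-k)^2}{k(v-k)(e^\epsilon-1)^2v}+\frac{1}{v}-\sum_{x\in\mathcal{X}}P_x^2\right),$$ and its worst-case risk is $$\sup_{P\in\Delta_v}R_{v,n}(\ell_2^2,P,Q,\hat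 P_n)=\frac{(v-1)^2(ke^\epsilon+v-k)^2}{k(v-k)(e^\epsilon-1)^2nv},$$ the supremum being attained when $P$ is the uniform distribution.
   Context: $\Delta_v$ is the set of probability vectors on $\{1,\dots,v\}$. An incidence structure is a triple $(\mathcal{X},\mathcal{Y},\mathcal{I})$ with $\mathcal{I}\subset\mathcal{X}\times\mathcal{Y}$; write $\mathcal{I}_x=\{y:(x,y)\in\mathcal{I}\}$ and $\mathcal{I}^y=\{x:(x,y)\in\mathcal{I}\}$. For integers $v>k>0$, $b>r>\lambda\ge0$, a $(v,b,r,k,\lambda)$-block design is an incidence structure with $|\mathcal{X}|=v$, $|\mathcal{Y}|=b$, $|\mathcal{I}_x|=r$ for all $x$, $|\mathcal{I}^y|=k$ for all $y$, and $|\mathcal{I}_x\cap\mathcal{I}_{x'}|=\lambda$ for all $x\ne x'$. The risk is $R_{v,n}(\ell,P,Q,\hat P_n)=\mathbb{E}[\ell(P,\hat P_n(Y_1,\dots,Y_n))]$ with expectation over $X_i\sim P$ i.i.d. and $Y_i\sim Q(\cdot|X_i)$. *)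

(* Defs.v *)
From HB Require Import structures.
From mathcomp Require Import all_boot all_order all_algebra.
From mathcomp Require Import reals.
From mathcomp.analysis Require Import sequences exp.
Set Implicit Arguments. Unset Strict Implicit. Unset Printing Implicit Defensive.
Import Order.TTheory GRing.Theory Num.Theory.
Local Open Scope ring_scope.

(* Points X = 'I_v (i.e. {1..v} shifted to {0..v-1}), blocks Y = 'I_b,
   incidence relation I : 'I_v -> 'I_b -> bool. *)

Definition block_design (v b r k lam : nat) (I : 'I_v -> 'I_b -> bool) : Prop :=
  [/\ (0 < k < v)%N, (lam < r < b)%N,
      (forall x : 'I_v, #|[set y | I x y]| = r),
      (forall y : 'I_b, #|[set x | I x y]| = k) &
      (forall x x' : 'I_v, x != x' -> #|[set y | I x y && I x' y]| = lam)].

Definition in_simplex (R : realType) (v : nat) (P : 'I_v -> R) : Prop :=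
  (forall x, 0 <= P x) /\ \sum_(x < v) P x = 1.

Section Mech.
Variables (R : realType) (v b r lam : nat) (I : 'I_v -> 'I_b -> bool) (eps : R).

Definition bd_alpha : R := (r%:R * expR eps + b%:R - r%:R)^-1.

Definition bd_Q (x : 'I_v) (y : 'I_b) : R :=
  if I x y then bd_alpha * expR eps else bd_alpha.

Definition bd_N (n : nat) (ys : 'I_n -> 'I_b) (x : 'I_v) : nat :=
  #|[set i : 'I_n | I x (ys i)]|.

Definition bd_est (n : nat) (ys : 'I_n -> 'I_b) (x : 'I_v) : R :=
  ((r%:R - lam%:R) * (expR eps - 1))^-1 *
  ((@bd_N n ys x)%:R / (n%:R * bd_alpha) - (lam%:R * expR eps + (r%:R - lam%:R))).

Definition bd_expect (n : nat) (P : 'I_v -> R) (f : {ffun 'I_n -> 'I_b} -> R) : R :=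
  \sum_(xs : {ffun 'I_n -> 'I_v}) \sum_(ys : {ffun 'I_n -> 'I_b})
     (\prod_(i < n) (P (xs i) * bd_Q (xs i) (ys i))) * f ys.

Definition l22 (p q : 'I_v -> R) : R := \sum_(x < v) (p x - q x) ^+ 2.

Definition bd_risk (n : nat) (P : 'I_v -> R) : R :=
  @bd_expect n P (fun ys => l22 P (@bd_est n ys)).

End Mech.

Arguments bd_alpha {R} b r eps.
Arguments bd_Q {R v b} r I eps x y.
Arguments bd_N {v b} I n ys x.
Arguments bd_est {R v b} r lam I eps n ys x.
Arguments bd_expect {R v b} r I eps n P f.
Arguments bd_risk {R v b} r lam I eps n P.

(* Main.v *)
Require Import Defs.
From HB Require Import structures.
From mathcomp Require Import all_boot all_order all_algebra.
From mathcomp Require Import classical_sets reals.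
From mathcomp.analysis Require Import sequences exp.
From mathcomp Require Import ring lra.
Import Order.TTheory GRing.Theory Num.Theory.
Local Open Scope ring_scope.
Set Implicit Arguments. Unset Strict Implicit.

Section S.
Variables (R : realType) (n b : nat) (mu : 'I_b -> R).
Lemma E_prod (G : 'I_n -> 'I_b -> R) :
  \sum_(ys : {ffun 'I_n -> 'I_b}) (\prod_i mu (ys i)) * \prod_i G i (ys i) =
  \prod_i \sum_y mu y * G i y.
Proof.
rewrite bigA_distr_bigA /=; apply: eq_bigr => ys _.
by rewrite -big_split.
Qed.

Lemma prod_if1 (i : 'I_n) (F : 'I_n -> R) :
  \prod_l (if l == i then F l else 1) = F i.
Proof. by rewrite -big_mkcond big_pred1_eq. Qed.

Hypothesis smu : \sum_y mu y = 1.

Lemma E_single (i : 'I_n) (h : 'I_b -> R) :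
  \sum_(ys : {ffun 'I_n -> 'I_b}) (\prod_l mu (ys l)) * h (ys i) =
  \sum_y mu y * h y.
Proof.
transitivity (\sum_(ys : {ffun 'I_n -> 'I_b}) (\prod_l mu (ys l)) *
   \prod_l (fun l y => if l == i then h y else 1) l (ys l)).
  by apply: eq_bigr => ys _; rewrite /= (prod_if1 i (fun l => h (ys l))).
rewrite (E_prod (fun l y => if l == i then h y else 1)) -(prod_if1 i (fun _ => \sum_y mu y * h y)).
apply: eq_bigr => l _; case: (l == i) => //.
by under eq_bigr do rewrite mulr1.
Qed.

Lemma E_pair (i j : 'I_n) (h1 h2 : 'I_b -> R) : i != j ->
  \sum_(ys : {ffun 'I_n -> 'I_b}) (\prod_l mu (ys l)) * (h1 (ys i) * h2 (ys j)) =
  (\sum_y mu y * h1 y) * (\sum_y mu y * h2 y).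
Proof.
move=> nij.
transitivity (\sum_(ys : {ffun 'I_n -> 'I_b}) (\prod_l mu (ys l)) *
   \prod_l (fun l y => (if l == i then h1 y else 1) * (if l == j then h2 y else 1)) l (ys l)).
  apply: eq_bigr => ys _; rewrite /= big_split /=.
  by rewrite (prod_if1 i (fun l => h1 (ys l))) (prod_if1 j (fun l => h2 (ys l))).
rewrite (E_prod (fun l y => (if l == i then h1 y else 1) * (if l == j then h2 y else 1))) -(prod_if1 i (fun _ => \sum_y mu y * h1 y)).
rewrite -(prod_if1 j (fun _ => \sum_y mu y * h2 y)) -big_split /=.
apply: eq_bigr => l _.
case: (eqVneq l i) => [?|nli].
  by subst; rewrite (negbTE nij) mulr1; under eq_bigr do rewrite mulr1.
rewrite mul1r; case: (eqVneq l j) => [?|nlj].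
  by subst; under eq_bigr do rewrite mul1r.
by under eq_bigr do rewrite mul1r mulr1; rewrite smu.
Qed.

Lemma E_w1 : \sum_(ys : {ffun 'I_n -> 'I_b}) (\prod_l mu (ys l)) = 1.
Proof.
transitivity (\sum_(ys : {ffun 'I_n -> 'I_b}) (\prod_l mu (ys l)) *
   \prod_l (fun (l : 'I_n) (y : 'I_b) => (1 : R)) l (ys l)).
  by apply: eq_bigr => ys _; rewrite /= big1_eq mulr1.
rewrite (E_prod (fun l y => 1)) big1 // => l _.
by under eq_bigr do rewrite mulr1.
Qed.

Lemma E_lin (A B : R) (g : {ffun 'I_n -> 'I_b} -> R) :
  \sum_(ys : {ffun 'I_n -> 'I_b}) (\prod_l mu (ys l)) * (A + B * g ys) =
  A + B * \sum_(ys : {ffun 'I_n -> 'I_b}) (\prod_l mu (ys l)) * g ys.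
Proof.
under eq_bigr do rewrite mulrDr mulrCA.
by rewrite big_split /= -big_distrl -big_distrr /= E_w1 mul1r.
Qed.

Lemma E_sum (J : finType) (g : J -> {ffun 'I_n -> 'I_b} -> R) :
  \sum_(ys : {ffun 'I_n -> 'I_b}) (\prod_l mu (ys l)) * (\sum_i g i ys) =
  \sum_i \sum_(ys : {ffun 'I_n -> 'I_b}) (\prod_l mu (ys l)) * g i ys.
Proof.
under eq_bigr do rewrite big_distrr /=.
by rewrite exchange_big.
Qed.
End S.

Lemma card_sum (T : finType) (p : pred T) :
  #|[set x | p x]| = (\sum_x (p x : nat))%N.
Proof.
rewrite -sum1_card big_mkcond /=; apply: eq_bigr => x _; rewrite inE.
by case: (p x).
Qed.

Lemma design_bk (v b r k lam : nat) (I : 'I_v -> 'I_b -> bool) :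
  block_design r k lam I -> (b * k = v * r)%N.
Proof.
case=> _ _ Hr Hk _.
have E1 : (\sum_(x < v) \sum_(y < b) (I x y : nat) = v * r)%N.
  under eq_bigr => x _ do rewrite -card_sum Hr.
  by rewrite sum_nat_const card_ord.
have E2 : (\sum_(y < b) \sum_(x < v) (I x y : nat) = b * k)%N.
  under eq_bigr => y _ do rewrite -(card_sum (fun x => I x y)) Hk.
  by rewrite sum_nat_const card_ord.
by rewrite -E1 -E2 exchange_big.
Qed.

Lemma design_lam (v b r k lam : nat) (I : 'I_v -> 'I_b -> bool) (x : 'I_v) :
  block_design r k lam I -> (lam * (v - 1) + r = r * k)%N.
Proof.
case=> _ _ Hr Hk Hl.
have E1 : (\sum_(x' < v) \sum_(y < b) ((I x y && I x' y) : nat) = r * k)%N.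
  rewrite exchange_big /=.
  transitivity (\sum_(y < b) (I x y : nat) * k)%N; last first.
    by rewrite -big_distrl /= -card_sum Hr.
  apply: eq_bigr => y _; case: (I x y) => /=.
    by rewrite mul1n -(Hk y) card_sum.
  by rewrite big1.
rewrite -E1 (bigD1 x) //= addnC; congr (_ + _)%N.
  rewrite -(Hr x) card_sum; apply: eq_bigr => y _; by rewrite andbb.
under eq_bigr => x' Hx' do rewrite -(card_sum (fun y => I x y && I x' y)) Hl 1?eq_sym //.
by rewrite sum_nat_const cardC1 card_ord subn1 mulnC.
Qed.

Lemma cardR (R : realType) (T : finType) (p : pred T) :
  (#|[set x | p x]|)%:R = \sum_x ((p x : nat)%:R : R).
Proof. by rewrite card_sum natr_sum. Qed.

Lemma sum_if (R : realType) (v : nat) (P : 'I_v -> R) (x : 'I_v) (A B : R) :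
  \sum_x' P x' * (if x' == x then A else B) = B * \sum_x' P x' + P x * (A - B).
Proof.
rewrite (bigD1 x) //= eqxx [in RHS](bigD1 x) //=.
have -> : \sum_(i < v | i != x) P i * (if i == x then A else B) =
          (\sum_(i < v | i != x) P i) * B.
  rewrite big_distrl /=; apply: eq_bigr => i /negbTE -> //.
ring.
Qed.

Lemma Q_eq (R : realType) v b r (I : 'I_v -> 'I_b -> bool) (eps : R) x y :
  bd_Q r I eps x y = bd_alpha b r eps * (1 + (expR eps - 1) * (I x y : nat)%:R).
Proof. rewrite /bd_Q; case: (I x y) => /=; ring. Qed.

Lemma alpha_inv (R : realType) b r (eps : R) : (r < b)%N -> 0 <= eps ->
  0 < r%:R * expR eps + b%:R - r%:R.
Proof.
move=> rb he.
have := expR_ge1Dx eps => e1.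
have : (r%:R : R) < b%:R by rewrite ltr_nat.
have : (0 : R) <= r%:R by [].
nra.
Qed.

Definition mu (R : realType) v b r (I : 'I_v -> 'I_b -> bool) (eps : R)
  (P : 'I_v -> R) (y : 'I_b) : R := \sum_x P x * bd_Q r I eps x y.

Lemma expect_mu (R : realType) v b r (I : 'I_v -> 'I_b -> bool) (eps : R) n
  (P : 'I_v -> R) (f : {ffun 'I_n -> 'I_b} -> R) :
  bd_expect r I eps n P f =
  \sum_(ys : {ffun 'I_n -> 'I_b}) (\prod_i mu r I eps P (ys i)) * f ys.
Proof.
rewrite /bd_expect exchange_big /=; apply: eq_bigr => ys _.
rewrite -big_distrl /=; congr (_ * _).
by rewrite /mu bigA_distr_bigA.
Qed.

Lemma sumQ (R : realType) v b r k lam (I : 'I_v -> 'I_b -> bool) (eps : R) x :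
  block_design r k lam I -> 0 <= eps ->
  \sum_y bd_Q r I eps x y = 1.
Proof.
move=> D he; have [_ /andP[_ rb] Hr _ _] := D.
under eq_bigr do rewrite Q_eq.
rewrite -big_distrr /= big_split /= -big_distrr /= -cardR Hr sumr_const card_ord.
rewrite /bd_alpha; have := alpha_inv rb he.
set a := (X in 0 < X) => ha.
have -> : (1 *+ b + (expR eps - 1) * r%:R : R) = a by rewrite /a -mulr_natr; ring.
by rewrite mulVf // gt_eqF.
Qed.

Lemma sum_mu (R : realType) v b r k lam (I : 'I_v -> 'I_b -> bool) (eps : R) P :
  block_design r k lam I -> 0 <= eps -> in_simplex P ->
  \sum_y mu r I eps P y = 1.
Proof.
move=> D he [_ sP]; rewrite /mu exchange_big /=.
under eq_bigr do rewrite -big_distrr /= (sumQ _ D he) mulr1.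
exact: sP.
Qed.

Lemma mu_a (R : realType) v b r k lam (I : 'I_v -> 'I_b -> bool) (eps : R) P x :
  block_design r k lam I -> 0 <= eps -> in_simplex P ->
  \sum_y mu r I eps P y * (I x y : nat)%:R =
  bd_alpha b r eps * ((lam%:R * expR eps + (r%:R - lam%:R)) +
                      P x * ((r%:R - lam%:R) * (expR eps - 1))).
Proof.
move=> D he [_ sP]; have [_ _ Hr _ Hl] := D.
rewrite /mu.
under eq_bigr do rewrite big_distrl /=.
rewrite exchange_big /=.
have inner : forall x', \sum_y P x' * bd_Q r I eps x' y * (I x y : nat)%:R =
   P x' * (bd_alpha b r eps * (r%:R + (expR eps - 1) *
       (if x' == x then r%:R else lam%:R))).
  move=> x'; rewrite -[RHS]mulr1.
  under eq_bigr do rewrite -mulrA.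
  rewrite -big_distrr /= mulr1; congr (_ * _).
  transitivity (\sum_y bd_alpha b r eps * ((I x y : nat)%:R +
      (expR eps - 1) * ((I x' y && I x y) : nat)%:R)).
    apply: eq_bigr => y _; rewrite Q_eq.
    by case: (I x' y); case: (I x y) => /=; ring.
  rewrite -big_distrr /= big_split /= -big_distrr /= -!cardR Hr.
  case: (eqVneq x' x) => [->|nx].
    have -> : [set y | I x y && I x y] = [set y | I x y] by apply/setP => y; rewrite !inE andbb.
    by rewrite Hr.
  by rewrite Hl.
under eq_bigr do rewrite inner mulrCA.
rewrite -big_distrr /=.
under eq_bigr do rewrite mulrDr.
rewrite big_split /= -big_distrl /= sP.
under eq_bigr do rewrite mulrCA.
rewrite -big_distrr /= sum_if sP.
ring.
Qed.

Lemma bdN_R (R : realType) v b (I : 'I_v -> 'I_b -> bool) n ys x :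
  (bd_N I n ys x)%:R = \sum_i ((I x (ys i) : nat)%:R : R).
Proof. by rewrite /bd_N cardR. Qed.

Lemma alpha_neq0 (R : realType) v b r k lam (I : 'I_v -> 'I_b -> bool) (eps : R) :
  block_design r k lam I -> 0 <= eps -> bd_alpha b r eps != 0.
Proof.
move=> [_ /andP[_ rb] _ _ _] he.
by rewrite /bd_alpha invr_eq0 gt_eqF // alpha_inv.
Qed.

Lemma unbiased (R : realType) v b r k lam (I : 'I_v -> 'I_b -> bool) (eps : R) n P x :
  block_design r k lam I -> 0 < eps -> (1 <= n)%N -> in_simplex P ->
  bd_expect r I eps n P (fun ys => bd_est r lam I eps n ys x) = P x.
Proof.
move=> D he hn sP.
have smu := sum_mu D (ltW he) sP.
have [_ /andP[lr _] _ _ _] := D.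
have ha := alpha_neq0 D (ltW he).
have e1 : expR eps - 1 != 0 by rewrite subr_eq0 gt_eqF // expR_gt1.
have rl : (r%:R - lam%:R : R) != 0 by rewrite subr_eq0 gt_eqF // ltr_nat.
have n0 : (n%:R : R) != 0 by rewrite pnatr_eq0 -lt0n.
rewrite expect_mu.
pose c := ((r%:R - lam%:R) * (expR eps - 1))^-1 : R.
pose d := lam%:R * expR eps + (r%:R - lam%:R) : R.
transitivity (\sum_(ys : {ffun 'I_n -> 'I_b}) (\prod_i mu r I eps P (ys i)) *
   (- (c * d) + (c / (n%:R * bd_alpha b r eps)) * (bd_N I n ys x)%:R)).
  apply: eq_bigr => ys _; congr (_ * _); rewrite /bd_est /c /d; ring.
rewrite E_lin //.
under eq_bigr do rewrite bdN_R.
rewrite E_sum.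
under eq_bigr do rewrite (E_single smu _ (fun y => (I x y : nat)%:R)).
rewrite sumr_const card_ord -mulr_natl (mu_a _ D (ltW he) sP) /c /d.
field.
by rewrite ha n0 e1 rl.
Qed.

Lemma risk_x (R : realType) v b r k lam (I : 'I_v -> 'I_b -> bool) (eps : R) n P x :
  block_design r k lam I -> 0 < eps -> (1 <= n)%N -> in_simplex P ->
  let c := ((r%:R - lam%:R) * (expR eps - 1))^-1 : R in
  let d := lam%:R * expR eps + (r%:R - lam%:R) : R in
  let t := c / bd_alpha b r eps in
  let s := P x + c * d in
  \sum_(ys : {ffun 'I_n -> 'I_b}) (\prod_i mu r I eps P (ys i)) *
     (P x - bd_est r lam I eps n ys x) ^+ 2 = n%:R^-1 * (s * (t - s)).
Proof.
move=> D he hn sP c d t s.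
have smu := sum_mu D (ltW he) sP.
have [_ /andP[lr _] _ _ _] := D.
have ha := alpha_neq0 D (ltW he).
have e1 : expR eps - 1 != 0 by rewrite subr_eq0 gt_eqF // expR_gt1.
have rl : (r%:R - lam%:R : R) != 0 by rewrite subr_eq0 gt_eqF // ltr_nat.
have n0 : (n%:R : R) != 0 by rewrite pnatr_eq0 -lt0n.
pose Z := fun y : 'I_b => s - t * (I x y : nat)%:R.
have q := mu_a x D (ltW he) sP.
have EZ : \sum_y mu r I eps P y * Z y = 0.
  rewrite /Z.
  under eq_bigr do rewrite mulrBr mulrCA.
  rewrite sumrB -big_distrl -big_distrr /= smu q /s /t /c /d.
  field. by rewrite ha e1 rl.
have EZ2 : \sum_y mu r I eps P y * (Z y * Z y) = s * (t - s).
  transitivity (\sum_y mu r I eps P y * (s ^+ 2 + (t ^+ 2 - 2 * s * t) * (I x y : nat)%:R)).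
    by apply: eq_bigr => y _; rewrite /Z; case: (I x y) => /=; ring.
  under eq_bigr do rewrite mulrDr [_ * (_ * _)]mulrCA.
  rewrite big_split /= -big_distrl -big_distrr /= smu q /s /t /c /d.
  field. by rewrite ha e1 rl.
transitivity (\sum_(ys : {ffun 'I_n -> 'I_b}) (\prod_i mu r I eps P (ys i)) *
   (n%:R ^- 2 * \sum_i \sum_j Z (ys i) * Z (ys j))).
  apply: eq_bigr => ys _; congr (_ * _).
  have HZ : \sum_i Z (ys i) = n%:R * s - t * (bd_N I n ys x)%:R.
    rewrite /Z sumrB sumr_const card_ord -big_distrr /= bdN_R.
    by rewrite mulr_natl.
  have -> : \sum_i \sum_j Z (ys i) * Z (ys j) = (\sum_i Z (ys i)) * (\sum_i Z (ys i)).
    by rewrite big_distrl /=; apply: eq_bigr => i _; rewrite big_distrr.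
  rewrite HZ /bd_est /s /t /c /d.
  field. by rewrite ha e1 rl n0.
under eq_bigr do rewrite mulrCA.
rewrite -big_distrr /= E_sum.
transitivity (n%:R ^- 2 * \sum_(i < n) s * (t - s)).
  congr (_ * _); apply: eq_bigr => i _.
  rewrite E_sum (bigD1 i) //= (E_single smu i (fun y => Z y * Z y)) EZ2.
  rewrite big1 ?addr0 // => j nji.
  by rewrite (E_pair smu (fun y => Z y) (fun y => Z y)) 1?eq_sym // EZ mul0r.
rewrite sumr_const card_ord -mulr_natl.
field. by rewrite n0.
Qed.

Lemma risk_formula (R : realType) v b r k lam (I : 'I_v -> 'I_b -> bool) (eps : R) n P :
  (2 <= v)%N -> block_design r k lam I -> 0 < eps -> (1 <= n)%N -> in_simplex P ->
  bd_risk r lam I eps n P =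
         n%:R^-1 * (((v%:R - 1) ^+ 2 * (k%:R * expR eps + v%:R - k%:R) ^+ 2) /
                     (k%:R * (v%:R - k%:R) * (expR eps - 1) ^+ 2 * v%:R)
                    + v%:R^-1 - \sum_(x < v) P x ^+ 2).
Proof.
move=> hv D he hn sP.
have [/andP[k0 kv] /andP[lr rb] _ _ _] := D.
have x0 : 'I_v by exists 0%N; apply: leq_trans hv.
have ha := alpha_neq0 D (ltW he).
have e1 : expR eps - 1 != 0 by rewrite subr_eq0 gt_eqF // expR_gt1.
have rl : (r%:R - lam%:R : R) != 0 by rewrite subr_eq0 gt_eqF // ltr_nat.
have n0 : (n%:R : R) != 0 by rewrite pnatr_eq0 -lt0n.
have v0 : (v%:R : R) != 0 by rewrite pnatr_eq0 -lt0n; apply: leq_trans hv.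
have kk : (k%:R : R) != 0 by rewrite pnatr_eq0 -lt0n.
have v1 : (v%:R - 1 : R) != 0.
  by rewrite subr_eq0 pnatr_eq1 gtn_eqF.
have vk : (v%:R - k%:R : R) != 0 by rewrite subr_eq0 eqr_nat gtn_eqF.
have r0 : (r%:R : R) != 0 by rewrite pnatr_eq0 -lt0n; apply: leq_ltn_trans lr.
have Hl := congr1 (fun m => m%:R : R) (design_lam x0 D).
rewrite /= natrD !natrM natrB ?(ltnW hv) // in Hl.
have hl : (lam%:R : R) = (r%:R * k%:R - r%:R) / (v%:R - 1).
  by rewrite -Hl addrK mulfK.
have Hb := congr1 (fun m => m%:R : R) (design_bk D).
rewrite /= !natrM in Hb.
have hb : (b%:R : R) = v%:R * r%:R / k%:R by rewrite -Hb mulfK.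
rewrite /bd_risk expect_mu /l22 E_sum.
under eq_bigr => x _ do rewrite (risk_x x D he hn sP).
pose c := ((r%:R - lam%:R) * (expR eps - 1))^-1 : R.
pose d := lam%:R * expR eps + (r%:R - lam%:R) : R.
pose t := c / bd_alpha b r eps.
transitivity (n%:R^-1 * \sum_(x < v) ((c * d * t - c ^+ 2 * d ^+ 2) + P x * (t - 2 * c * d) - P x ^+ 2)).
  rewrite big_distrr /=; apply: eq_bigr => x _; rewrite /t /c /d; congr (_ * _); ring.
rewrite sumrB big_split /= sumr_const card_ord -big_distrl /= (proj2 sP) mul1r.
congr (_ * (_ - _)).
rewrite /t /c /d /bd_alpha invrK hb hl -mulr_natr.
field.
have -> : (r%:R * (v%:R - 1) - (r%:R * k%:R - r%:R) : R) = r%:R * (v%:R - k%:R) by ring.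
by rewrite v0 e1 vk kk v1 mulf_neq0.
Qed.

Unset Implicit Arguments.
Local Open Scope classical_set_scope.

Theorem theorem1 (R : realType) (v b r k lam n : nat) (eps : R)
  (I : 'I_v -> 'I_b -> bool) :
  (2 <= v)%N -> (1 <= n)%N -> 0 < eps ->
  block_design r k lam I ->
  let worst : R :=
    ((v%:R - 1) ^+ 2 * (k%:R * expR eps + v%:R - k%:R) ^+ 2) /
    (k%:R * (v%:R - k%:R) * (expR eps - 1) ^+ 2 * n%:R * v%:R) in
  let unif : 'I_v -> R := fun _ => v%:R^-1 in
  [/\ (forall P : 'I_v -> R, in_simplex P ->
         forall x : 'I_v,
           bd_expect r I eps n P (fun ys => bd_est r lam I eps n ys x) = P x),
      (forall P : 'I_v -> R, in_simplex P ->
         bd_risk r lam I eps n P =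
         n%:R^-1 * (((v%:R - 1) ^+ 2 * (k%:R * expR eps + v%:R - k%:R) ^+ 2) /
                     (k%:R * (v%:R - k%:R) * (expR eps - 1) ^+ 2 * v%:R)
                    + v%:R^-1 - \sum_(x < v) P x ^+ 2)),
      sup [set bd_risk r lam I eps n P | P in [set P | in_simplex P]] = worst &
      bd_risk r lam I eps n unif = worst].
Proof.
move=> hv hn he D worst unif.
have RF := fun P sP => risk_formula hv D he hn (P:=P) sP.
have [/andP[k0 kv] _ _ _ _] := D.
have n0 : (n%:R : R) != 0 by rewrite pnatr_eq0 -lt0n.
have v0 : (v%:R : R) != 0 by rewrite pnatr_eq0 -lt0n; apply: leq_trans hv.
have e1 : expR eps - 1 != 0 by rewrite subr_eq0 gt_eqF // expR_gt1.
have kk : (k%:R : R) != 0 by rewrite pnatr_eq0 -lt0n.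
have vk : (v%:R - k%:R : R) != 0 by rewrite subr_eq0 eqr_nat gtn_eqF.
have su : in_simplex unif.
  split => [x|]; first by rewrite /unif invr_ge0 ler0n.
  by rewrite /unif sumr_const card_ord -(mulr_natl (v%:R^-1)) mulfV.
have wu : bd_risk r lam I eps n unif = worst.
  rewrite RF // /unif sumr_const card_ord -(mulr_natl (v%:R^-1 ^+ 2)) /worst.
  field. by rewrite n0 v0 e1 kk vk.
have ub : forall P, in_simplex P -> bd_risk r lam I eps n P <= worst.
  move=> P sP; rewrite -wu !RF //.
  rewrite ler_wpM2l ?invr_ge0 ?ler0n // lerD2l.
  rewrite /unif sumr_const card_ord lerN2 -(mulr_natl (v%:R^-1 ^+ 2)).
  have H0 : 0 <= \sum_(x < v) (P x - v%:R^-1) ^+ 2 by apply: sumr_ge0 => x _; exact: sqr_ge0.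
  have e2 : \sum_(x < v) (P x - v%:R^-1) ^+ 2 = \sum_(x < v) P x ^+ 2 - v%:R^-1.
    transitivity (\sum_(x < v) (P x ^+ 2 + (-(2 * v%:R^-1)) * P x + v%:R^-1 ^+ 2)).
      by apply: eq_bigr => x _; ring.
    rewrite !big_split /= -big_distrr /= (proj2 sP) sumr_const card_ord.
    rewrite -(mulr_natl (v%:R^-1 ^+ 2)).
    field. by rewrite v0.
  have -> : (v%:R * v%:R^-1 ^+ 2 : R) = v%:R^-1 by field.
  by rewrite -subr_ge0 -e2.
split; [ by move=> P sP x; exact: (unbiased x D he hn sP)
       | by move=> P sP; exact: RF
       | | exact: wu].
apply/eqP; rewrite eq_le; apply/andP; split.
    apply: ge_sup; first by exists worst, unif.
    by move=> y [P sP <-]; apply: ub.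
  apply: ub_le_sup; last by exists unif.
  by exists worst => y [P sP <-]; apply: ub.
Qed.
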